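(* Let $G$ be a Frobenius group with cyclic Frobenius kernel $N$ of order $p^a$ and cyclic Frobenius complement $C$ of order $q^m$, where $p,q$ are primes and $a,m\ge 1$. Then $G\in\mathcal{D}_{(a+1)m-1}$.
   Context: $\mathcal{D}(G)$ denotes the number of conjugacy classes of nontrivial subgroups $H$ of the finite group $G$ with $N_G(H)\neq H$; $\mathcal{D}_n$ is the family of finite groups $G$ with $\mathcal{D}(G)=n$. *)

(* Defs.v *)
From mathcomp Require Import all_boot all_fingroup all_solvable.
Set Implicit Arguments. Unset Strict Implicit. Unset Printing Implicit Defensive.
Local Open Scope group_scope.

Definition nonselfnorm_subgroups (gT : finGroupType) (G : {set gT}) : {set {set gT}} :=
  [set H : {set gT} | [&& group_set H, H \subset G, H != 1 & 'N_G(H) != H]].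

Definition Dnum (gT : finGroupType) (G : {set gT}) : nat :=
  #|[set H :^: G | H in nonselfnorm_subgroups G]|.

(* Main.v *)
Require Import Defs.
From mathcomp Require Import all_boot all_fingroup all_solvable.
Set Implicit Arguments. Unset Strict Implicit. Unset Printing Implicit Defensive.
Local Open Scope group_scope.

Lemma split_order p q d : prime p -> prime q -> p != q -> 0 < d ->
  (forall r, prime r -> r %| d -> (r == p) || (r == q)) ->
  d = (p ^ logn p d * q ^ logn q d)%N.
Proof.
move=> pp pq npq d0 Hr.
rewrite -!p_part -{1}(partnC p d0); congr (_ * _)%N.
apply: eq_in_partn => r; rewrite mem_primes => /and3P[pr _ rd].
have /orP[/eqP-> | /eqP->] := Hr r pr rd; rewrite !inE ?eqxx ?(negPf npq) //.
by rewrite eq_sym.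
Qed.

Lemma pdiv2 p q a m r : prime p -> prime q -> prime r -> r %| (p ^ a * q ^ m)%N ->
  (r == p) || (r == q).
Proof.
move=> pp pq pr; rewrite Euclid_dvdM // => /orP[]; rewrite Euclid_dvdX // => /andP[];
  by rewrite dvdn_prime2 // => ->; rewrite ?orbT.
Qed.

Lemma logn_pq p q i j : prime p -> prime q -> p != q ->
  logn p (p ^ i * q ^ j) = i.
Proof.
move=> pp pq npq; rewrite mulnC logn_Gauss ?pfactorK //.
by apply: coprimeXr; rewrite prime_coprime // dvdn_prime2 // eq_sym.
Qed.

Record ctx (gT : finGroupType) (G N C : {group gT}) (p q a m : nat) : Prop := Ctx {
  c_pp : prime p; c_pq : prime q; c_npq : p != q;
  c_nN : N <| G; c_sC : C \subset G;
  c_cN : cyclic N; c_cC : cyclic C;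
  c_oN : #|N| = (p ^ a)%N; c_oC : #|C| = (q ^ m)%N;
  c_oG : #|G| = (p ^ a * q ^ m)%N;
  c_NC : 'N_G(C) = C }.

Lemma frob_ctx (gT : finGroupType) (G N C : {group gT}) (p q a m : nat) :
  prime p -> prime q -> 0 < a -> 0 < m ->
  [Frobenius G = N ><| C] ->
  cyclic N -> #|N| = (p ^ a)%N ->
  cyclic C -> #|C| = (q ^ m)%N -> ctx G N C p q a m.
Proof.
move=> pp pq a0 m0 frob cN oN cC oC.
have [defG _ _ _ _] := Frobenius_context frob.
have [nNG sCG _ _ _] := sdprod_context defG.
have cop := Frobenius_coprime frob.
have npq : p != q.
  apply: contraTneq cop => epq; rewrite oN oC -epq coprime_pexpl // coprime_pexpr //.
  by rewrite prime_coprime // dvdnn.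
have /andP[_ /and3P[_ _ /eqP nC]] := FrobeniusWcompl frob.
rewrite normD1 in nC.
split=> //; by rewrite -(sdprod_card defG) oN oC.
Qed.

Lemma cop_pq p q i j : prime p -> prime q -> p != q -> coprime (p ^ i) (q ^ j).
Proof.
move=> pp pq npq; apply: coprimeXl; apply: coprimeXr.
by rewrite prime_coprime // dvdn_prime2.
Qed.

Section S.
Variables (gT : finGroupType) (G N C : {group gT}) (p q a m : nat).
Hypothesis cx : ctx G N C p q a m.

Lemma ctx_order (H : {group gT}) : H \subset G ->
  [/\ #|H| = (p ^ logn p #|H| * q ^ logn q #|H|)%N,
      logn p #|H| <= a & logn q #|H| <= m].
Proof.
case: cx => pp pq npq _ _ _ _ _ _ oG _ sHG.
have dH := cardSg sHG; rewrite oG in dH.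
have G0 : (0 < p ^ a * q ^ m)%N by rewrite -oG cardG_gt0.
split.
- apply: split_order => // r pr rH; apply: (@pdiv2 p q a m r pp pq pr).
  exact: dvdn_trans dH.
- by rewrite -(logn_pq a m pp pq npq); apply: dvdn_leq_log.
- rewrite -(logn_pq m a pq pp) 1?eq_sym // mulnC; exact: dvdn_leq_log.
Qed.

Lemma sylow_C : q.-Sylow(G) C.
Proof.
case: cx => pp pq npq _ sCG _ _ _ oC oG _.
by rewrite pHallE sCG p_part oG mulnC logn_pq 1?eq_sym // oC eqxx.
Qed.

Lemma hall_N : p.-Hall(G) N.
Proof.
case: cx => pp pq npq nNG _ _ _ oN _ oG _.
by rewrite pHallE (normal_sub nNG) p_part oG logn_pq // oN eqxx.
Qed.

Lemma subN_norm (X : {group gT}) : X \subset N -> G \subset 'N(X).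
Proof.
case: cx => _ _ _ nNG _ cN _ _ _ _ _ sXN.
apply/subsetP=> g Gg; rewrite inE.
have nNg : N :^ g = N by apply/normP; apply: (subsetP (normal_norm nNG)).
have sXg : X :^ g \subset N by rewrite -nNg conjSg.
by rewrite (eqP (_ : (X :^ g)%G :==: X)) // (eq_subG_cyclic cN) //= cardJg.
Qed.

Lemma decomp (H : {group gT}) : H \subset G ->
  exists2 g, g \in G & exists X : {group gT}, exists Y : {group gT},
    [/\ X \subset N, Y \subset C, #|X| = (p ^ logn p #|H|)%N,
        #|Y| = (q ^ logn q #|H|)%N & H :^ g = X * Y].
Proof.
move=> sHG; have [oH _ _] := ctx_order sHG.
case: cx => pp pq npq nNG sCG _ _ _ _ _ _.
have hNH := setI_normal_Hall nNG hall_N sHG.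
have [Q sylQ] := Sylow_exists q H.
have sQG := subset_trans (pHall_sub sylQ) sHG.
have [g Gg sQgC] := Sylow_Jsub sylow_C sQG (pHall_pgroup sylQ).
have oNH : #|N :&: H| = (p ^ logn p #|H|)%N by rewrite (card_Hall hNH) p_part.
have oQ : #|Q| = (q ^ logn q #|H|)%N by rewrite (card_Hall sylQ) p_part.
exists g => //; exists ((N :&: H) :^ g)%G, (Q :^ g)%G; split=> //.
- have nNg : N :^ g = N by apply/normP; apply: (subsetP (normal_norm nNG)).
  by rewrite /= -{2}nNg conjSg subsetIl.
- by rewrite /= cardJg.
- by rewrite /= cardJg.
rewrite /= -conjsMg; congr (_ :^ g).
apply/eqP; rewrite eq_sym eqEcard mulG_subG subsetIr (pHall_sub sylQ) /=.
rewrite TI_cardMg ?oNH ?oQ -?oH //.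
by apply: coprime_TIg; rewrite oNH oQ cop_pq.
Qed.

Lemma conj_same (H K : {group gT}) : H \subset G -> K \subset G -> #|H| = #|K| ->
  exists2 g, g \in G & H :^ g = K.
Proof.
move=> sHG sKG oHK.
have [g1 G1 [X1 [Y1 [sX1 sY1 oX1 oY1 e1]]]] := decomp sHG.
have [g2 G2 [X2 [Y2 [sX2 sY2 oX2 oY2 e2]]]] := decomp sKG.
case: cx => _ _ _ _ _ cN cC _ _ _ _.
have eX : X1 :==: X2 by rewrite (eq_subG_cyclic cN) // oX1 oX2 oHK.
have eY : Y1 :==: Y2 by rewrite (eq_subG_cyclic cC) // oY1 oY2 oHK.
exists (g1 * g2^-1); first by rewrite groupM ?groupV.
by rewrite conjsgM e1 (eqP eX) (eqP eY) -e2 conjsgK.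
Qed.

Lemma normG_C (y : gT) : y \in G -> 'N_G(C :^ y) = C :^ y.
Proof.
case: cx => _ _ _ _ _ _ _ _ _ _ nC Gy.
by rewrite normJ -{1}(conjGid Gy) -conjIg nC.
Qed.

Lemma norm_lt (H : {group gT}) : H \subset G -> logn q #|H| < m -> 'N_G(H) != H.
Proof.
move=> sHG lt; apply: contraTneq lt => nH; rewrite -leqNgt.
have [g Gg [X [Y [sXN sYC _ _ e]]]] := decomp sHG.
case: cx => pp pq npq _ sCG _ cC _ oC _ _.
have nCH : C \subset 'N(H :^ g).
  rewrite e normsM //; first exact: subset_trans sCG (subN_norm sXN).
  exact: sub_abelian_norm (cyclic_abelian cC) sYC.
have sCH : C :^ g^-1 \subset H.
  rewrite -nH subsetI !sub_conjgV (conjGid Gg) sCG /=.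
  by rewrite -normJ.
have := cardSg sCH; rewrite cardJg oC => dH.
by rewrite -(pfactorK m pq); apply: dvdn_leq_log.
Qed.

Lemma norm_eq (H : {group gT}) : H \subset G -> logn q #|H| = m -> 'N_G(H) = H.
Proof.
move=> sHG lm.
case: cx => pp pq npq _ sCG _ cC _ oC oG _.
have [Q sylQ] := Sylow_exists q H.
have oQ : #|Q| = (q ^ m)%N by rewrite (card_Hall sylQ) p_part lm.
have sylQG : q.-Sylow(G) Q.
  rewrite pHallE (subset_trans (pHall_sub sylQ) sHG) oQ.
  by rewrite -oC (card_Hall sylow_C) eqxx.
have [y Gy eQ] := Sylow_trans sylow_C sylQG.
have nQ : 'N_G(Q) = Q by rewrite eQ normG_C.
have nsH : H <| 'N_G(H) by rewrite normal_subnorm.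
have := Frattini_arg nsH sylQ => fr.
apply/eqP; rewrite eqEsubset -{1}fr mulG_subG subxx /=.
rewrite subsetI sHG normG /= andbT.
apply: (@subset_trans _ _ Q); last exact: pHall_sub sylQ.
apply: (@subset_trans _ _ ('N_G(Q))); last by rewrite nQ.
by apply: setSI; apply: subsetIl.
Qed.

End S.

Lemma cyc_sub (gT : finGroupType) (X : {group gT}) r n k :
  prime r -> cyclic X -> #|X| = (r ^ n)%N -> k <= n ->
  exists Y : {group gT}, Y \subset X /\ #|Y| = (r ^ k)%N.
Proof.
move=> pr /cyclicP[x eX] oX kn.
exists <[x ^+ (r ^ (n - k))]>%G; split; first by rewrite eX cycle_subG mem_cycle.
have ox : (#[x] = r ^ n)%N by rewrite /order -eX.
change (#[x ^+ (r ^ (n - k))] = r ^ k)%N.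
rewrite orderXdiv ox ?dvdn_exp2l ?leq_subr // -expnB ?prime_gt0 ?leq_subr //.
by rewrite subKn.
Qed.

Lemma memS (gT : finGroupType) (G A : {set gT}) : A \in nonselfnorm_subgroups G ->
  exists H : {group gT}, [/\ A = H, H \subset G, H :!=: 1 & 'N_G(H) != H].
Proof.
rewrite inE => /and4P[gA sAG ntA nA]; by exists (Group gA).
Qed.

Lemma repr_conjs (gT : finGroupType) (G H : {group gT}) :
  #|repr (H :^: G)| = #|H|.
Proof.
have : H :^: G != set0.
  by apply/set0Pn; exists (H :^ 1); apply: imset_f; apply: group1.
case/set0Pn=> B /mem_repr /imsetP[x _ ->]; exact: cardJg.
Qed.

Lemma class_conj (gT : finGroupType) (G H : {group gT}) g :
  g \in G -> (H :^ g) :^: G = H :^: G.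
Proof. by move=> Gg; rewrite conjugates_conj lcoset_id. Qed.

Theorem mainTheorem8 (gT : finGroupType) (G N C : {group gT}) (p q a m : nat) :
  prime p -> prime q -> 0 < a -> 0 < m ->
  [Frobenius G = N ><| C] ->
  cyclic N -> #|N| = (p ^ a)%N ->
  cyclic C -> #|C| = (q ^ m)%N ->
  Dnum G = ((a + 1) * m - 1)%N.
Proof.
move=> pp pq a0 m0 frob cN oN cC oC.
have cx := frob_ctx pp pq a0 m0 frob cN oN cC oC.
case: m m0 oC cx => // m' _ oC cx.
have [_ _ npq nNG sCG _ _ _ _ _ _] := cx.
have sNG := normal_sub nNG.
set S := nonselfnorm_subgroups G.
pose phi (X : {set {set gT}}) : 'I_a.+1 * 'I_m'.+1 :=
  (inord (logn p #|repr X|), inord (logn q #|repr X|)).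
pose T := [set ij : 'I_a.+1 * 'I_m'.+1 | (ij.1 != 0 :> nat) || (ij.2 != 0 :> nat)].
have bnd : forall H : {group gT}, H \subset G -> 'N_G(H) != H ->
    logn p #|H| < a.+1 /\ logn q #|H| < m'.+1.
  move=> H sHG nH; have [_ la lm] := ctx_order cx sHG; split => //.
  rewrite ltn_neqAle lm andbT; apply: contra nH => /eqP e.
  by rewrite (norm_eq cx sHG e).
have inj : {in [set H :^: G | H in S] &, injective phi}.
  move=> X Y /imsetP[A /memS[H [-> sHG ntH nH]] ->].
  move=> /imsetP[B /memS[K [-> sKG ntK nK]] ->] e.
  have [l1 l2] := bnd H sHG nH; have [l3 l4] := bnd K sKG nK.
  move: e; rewrite /phi !repr_conjs => /eqP; rewrite xpair_eqE => /andP[/eqP e1 /eqP e2].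
  have f1 : logn p #|H| = logn p #|K| by move/(congr1 (@nat_of_ord _)): e1; rewrite !inordK.
  have f2 : logn q #|H| = logn q #|K| by move/(congr1 (@nat_of_ord _)): e2; rewrite !inordK.
  have oHK : #|H| = #|K|.
    have [oH _ _] := ctx_order cx sHG; have [oK _ _] := ctx_order cx sKG.
    by rewrite oH oK f1 f2.
  have [g Gg e] := conj_same cx sHG sKG oHK.
  by rewrite -e class_conj.
rewrite /Dnum -/S -(card_in_imset inj).
have -> : phi @: [set H :^: G | H in S] = T.
  apply/setP => ij; apply/imsetP/idP.
  - case=> X /imsetP[A /memS[H [-> sHG ntH nH]] ->] ->.
    have [l1 l2] := bnd H sHG nH.
    rewrite inE /phi repr_conjs /= !inordK //.
    apply: contraR ntH; rewrite negb_or !negbK => /andP[/eqP e1 /eqP e2].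
    have [oH _ _] := ctx_order cx sHG.
    by rewrite trivg_card1 oH e1 e2.
  - rewrite inE; case: ij => i j /= nz.
    have [Y [sYN oY]] := cyc_sub pp cN oN (ltn_ord i).
    have [Z [sZC oZ]] := cyc_sub pq cC oC (ltnW (ltn_ord j)).
    have nYZ : Z \subset 'N(Y) :=
      subset_trans (subset_trans sZC sCG) (subN_norm cx sYN).
    have oH : #|Y <*> Z| = (p ^ i * q ^ j)%N.
      rewrite norm_joinEr // TI_cardMg ?oY ?oZ //.
      by apply: coprime_TIg; rewrite oY oZ cop_pq.
    have sHG : Y <*> Z \subset G.
      by rewrite join_subG (subset_trans sYN sNG) (subset_trans sZC sCG).
    have lp : logn p #|Y <*> Z| = i by rewrite oH logn_pq.
    have lq : logn q #|Y <*> Z| = j by rewrite oH mulnC logn_pq // eq_sym.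
    exists ((Y <*> Z)%G :^: G).
      apply: imset_f; rewrite inE groupP sHG /= (norm_lt cx) ?lq // andbT.
      rewrite trivg_card1; apply/eqP => e1; move: nz.
      by rewrite -lp -lq e1 !logn1.
    by rewrite /phi repr_conjs lp lq !inord_val.
have -> : T = ~: [set (ord0, ord0)].
  by apply/setP => -[i j]; rewrite !inE xpair_eqE -!val_eqE /= negb_and.
have := cardsC [set (ord0, ord0) : 'I_a.+1 * 'I_m'.+1].
rewrite cards1 card_prod !card_ord addn1 => <-.
by rewrite addKn.
Qed.
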